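(* Let $G$ be a directed graph with positive integer edge weights, let $0<\epsilon\le 1$, let $x,y$ be nodes, let $h\ge 1$, $r\ge 0$, $\alpha\ge 1$, and let $\mathcal Q\subseteq V$ be a set of nodes such that $\mathcal P^h(x,y,\alpha(1+\epsilon)^r,G)\subseteq\mathcal Q$. Then $\mathcal P^h(x,y,\alpha(1+\epsilon)^r,G)\subseteq\mathcal P(x,y,\alpha(1+\epsilon)^{r+1},\tilde G^{h,r}[\mathcal Q])$.
   Context: For a weighted directed graph $H$, nodes $x,y$ and $D\ge 1$: the path union $\mathcal P(x,y,D,H)$ is the set of nodes lying on some path from $x$ to $y$ in $H$ of weight at most $D$; for an integer $h\ge 1$ the $h$-hop path union $\mathcal P^h(x,y,D,H)$ is the set of nodes lying on some path from $x$ to $y$ in $H$ with at most $h$ edges and weight at most $D$. For $h\ge 1$ and $r\ge 0$, $\tilde G^{h,r}$ has the same nodes and edges as $G$, with each edge weight rounded up to the next multiple of $\epsilon(1+\epsilon)^r/h$: $w_{\tilde G^{h,r}}(u,v)=\lceil w_G(u,v)\,h/(\epsilon(1+\epsilon)^r)\rceil\cdot\epsilon(1+\epsilon)^r/h$. $\tilde G^{h,r}[\mathcal Q]$ is the subgraph of $\tilde G^{h,r}$ induced by $\mathcal Q$. *)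

(* Defs.v *)
From mathcomp Require Import all_boot all_order all_algebra.
From mathcomp Require Import reals.
Set Implicit Arguments. Unset Strict Implicit. Unset Printing Implicit Defensive.
Import Order.TTheory GRing.Theory Num.Theory.
Local Open Scope ring_scope.

Record wdigraph (V : finType) (R : realType) := WDigraph {
  wnodes : {set V};
  wedge  : rel V;
  wweight : V -> V -> R
}.

Section Paths.
Variables (V : finType) (R : realType) (H : wdigraph V R).

(* x :: p is a path (walk) in H from x to y *)
Definition is_path (x : V) (p : seq V) (y : V) : bool :=
  [&& path (wedge H) x p, last x p == y & all (fun v => v \in wnodes H) (x :: p)].

Definition path_weight (x : V) (p : seq V) : R :=
  \sum_(e <- zip (x :: p) p) wweight H e.1 e.2.

Definition path_hops (p : seq V) : nat := size p.

Definition path_union (x y : V) (D : R) : V -> Prop :=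
  fun v => exists p : seq V,
    [/\ is_path x p y, path_weight x p <= D & v \in x :: p].

Definition hop_path_union (h : nat) (x y : V) (D : R) : V -> Prop :=
  fun v => exists p : seq V,
    [/\ is_path x p y, (path_hops p <= h)%N, path_weight x p <= D & v \in x :: p].
End Paths.

Definition graph_of (V : finType) (R : realType) (E : rel V) (wG : V -> V -> nat)
  : wdigraph V R := WDigraph [set: V] E (fun u v => (wG u v)%:R).

Definition round_weight (R : realType) (eps : R) (h r : nat) (w : R) : R :=
  let u := eps * (1 + eps) ^+ r / h%:R in
  (Num.ceil (w / u))%:~R * u.

Definition rounded_graph (V : finType) (R : realType) (E : rel V)
  (wG : V -> V -> nat) (eps : R) (h r : nat) : wdigraph V R :=
  WDigraph [set: V] E (fun u v => round_weight eps h r (wG u v)%:R).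

Definition induced (V : finType) (R : realType) (H : wdigraph V R) (Q : {set V})
  : wdigraph V R :=
  WDigraph (wnodes H :&: Q) (fun u v => [&& wedge H u v, u \in Q & v \in Q])
           (wweight H).

(* Main.v *)
Require Import Defs.
From mathcomp Require Import all_boot all_order all_algebra.
From mathcomp Require Import reals.
From mathcomp Require Import ring.
Import Order.TTheory GRing.Theory Num.Theory.
Local Open Scope ring_scope.

Lemma round_le (R : realType) (eps : R) (h r : nat) (w : R) :
  0 < eps -> (0 < h)%N ->
  round_weight eps h r w <= w + eps * (1 + eps) ^+ r / h%:R.
Proof.
move=> he hh; rewrite /round_weight.
set u := eps * (1 + eps) ^+ r / h%:R.
have hu : 0 < u.
  by rewrite /u divr_gt0 ?ltr0n // mulr_gt0 // exprn_gt0 // ltr_wpDr // ltW.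
have := ceilB1_lt (w / u); rewrite rmorphB /= => H.
have H2 : (Num.ceil (w / u))%:~R <= w / u + 1 by rewrite -lerBlDr ltW.
apply: le_trans (ler_wpM2r (ltW hu) H2) _.
by rewrite mulrDl divfK ?gt_eqF // mul1r.
Qed.

Lemma weight_rounded (R : realType) (V : finType) (E : rel V) (wG : V -> V -> nat)
  (eps : R) (h r : nat) (Q : {set V}) (he : 0 < eps) (hh : (0 < h)%N) :
  forall (p : seq V) (x : V),
  path_weight (induced (rounded_graph E wG eps h r) Q) x p <=
  path_weight (graph_of R E wG) x p + (size p)%:R * (eps * (1 + eps) ^+ r / h%:R).
Proof.
elim=> [|a p IH] x.
  by rewrite /path_weight /= !big_nil mul0r addr0.
rewrite /path_weight /= !big_cons /=.
have := IH a; rewrite /path_weight => IHa.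
rewrite -addn1 natrD mulrDl mul1r.
rewrite [X in _ <= X](_ : _ = ((wG x a)%:R + eps * (1 + eps) ^+ r / h%:R) +
   ((\sum_(e <- zip (a :: p) p) (wG e.1 e.2)%:R) + (size p)%:R * (eps * (1 + eps) ^+ r / h%:R))); last first.
  by ring.
apply: lerD; [exact: round_le | exact: IHa].
Qed.

Theorem lemma6p3 (R : realType) (V : finType) (E : rel V) (wG : V -> V -> nat)
  (hw : forall u v, E u v -> (0 < wG u v)%N)
  (eps : R) (heps0 : 0 < eps) (heps1 : eps <= 1)
  (x y : V) (h r : nat) (hh : (1 <= h)%N) (alpha : R) (halpha : 1 <= alpha)
  (Q : {set V})
  (hQ : forall v, hop_path_union (graph_of R E wG) h x y (alpha * (1 + eps) ^+ r) v
                  -> v \in Q) :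
  forall v, hop_path_union (graph_of R E wG) h x y (alpha * (1 + eps) ^+ r) v ->
    path_union (induced (rounded_graph E wG eps h r) Q) x y
               (alpha * (1 + eps) ^+ r.+1) v.
Proof.
move=> v [p [Hp Hh Hw Hv]].
have inQ : forall w, w \in x :: p -> w \in Q.
  by move=> w hw'; apply: hQ; exists p; split.
have allQ : all (fun w => w \in Q) (x :: p) by apply/allP.
exists p; split => //.
- move: Hp; rewrite /is_path => /and3P [Hpa Hl _].
  apply/and3P; split.
  + apply: (sub_in_path (P := mem (x :: p))) Hpa; last by apply/allP.
    by move=> a b ha hb /= hab; rewrite hab inQ ?inQ.
  + exact: Hl.
  + apply/allP => w hw'; rewrite !inE /=; exact: inQ.
- apply: le_trans (@weight_rounded R V E wG eps h r Q heps0 hh p x) _.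
  set c := (1 + eps) ^+ r.
  have hc : 0 <= c by rewrite exprn_ge0 // addr_ge0 // ltW.
  have h1 : (size p)%:R * (eps * c / h%:R) <= eps * c.
    have -> : (size p)%:R * (eps * c / h%:R) = eps * c * ((size p)%:R / h%:R) by ring.
    apply: ler_piMr; first by rewrite mulr_ge0 // ltW.
    by rewrite ler_pdivrMr ?ltr0n // mul1r ler_nat.
  rewrite exprSr.
  apply: le_trans (lerD Hw h1) _.
  rewrite -/c.
  have -> : alpha * (c * (1 + eps)) = alpha * c + alpha * (eps * c) by ring.
  rewrite lerD2l ler_peMl //.
  by rewrite mulr_ge0 // ltW.
Qed.
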